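(* The signature of the bilinear form $\eta^+$ on $V_q^+$ is $\operatorname{sg}(\eta^+)=\frac12\sum_{n=1}^{r-1}\epsilon_n$, and $\operatorname{sg}(\eta^+)=\operatorname{sg}_{V_q^+}(\Omega^+)$, the signature of the quadratic form $(x,y)\mapsto\operatorname{tr}_{V_q^+}(\Omega^+xy)$.
   Context: Let $r\ge3$ and $s$ be coprime odd integers with $0<s<r$, $q=\exp(i\pi s/r)$, and $\epsilon_n=(-1)^{\lfloor ns/r\rfloor}$ for $1\le n\le r-1$ (the sign of $[n]=\frac{q^n-q^{-n}}{q-q^{-1}}$; note $\epsilon_n=\epsilon_{r-n}$). $V_q^+$ is the SO$_3$ signed Verlinde algebra: the commutative semisimple $\mathbb{Q}$-algebra with basis $e_0,e_2,\dots,e_{r-3}$ (the even part of the signed Verlinde algebra $V_q$), a Frobenius algebra whose form $\eta^+(x,y)=\epsilon^+(xy)$ is diagonal in this basis with $\eta^+(e_{2n},e_{2n})=\epsilon_{2n+1}$, and $\Omega^+=\sum_n\epsilon_{2n+1}e_{2n}^2$. $\operatorname{tr}_{V}(a)$ denotes the trace of multiplication by $a$. *)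

(* Defs.v *)
From HB Require Import structures.
From mathcomp Require Import all_boot all_order all_algebra.
Set Implicit Arguments. Unset Strict Implicit. Unset Printing Implicit Defensive.
Import Order.TTheory GRing.Theory Num.Theory.
Local Open Scope ring_scope.

(* epsilon_n = (-1)^floor(n s / r), the sign of the quantum integer [n] at q = exp(i pi s/r) *)
Definition eps (r s n : nat) : int := if odd ((n * s) %/ r)%N then -1 else 1.

(* A finite-dimensional Q-algebra structure on 'rV[rat]_m given by structure
   constants: c i j = e_i * e_j (coordinates in the basis e_0..e_{m-1}). *)
Definition basisV (m : nat) (i : 'I_m) : 'rV[rat]_m := delta_mx 0 i.

Definition mulV (m : nat) (c : 'I_m -> 'I_m -> 'rV[rat]_m) (x y : 'rV[rat]_m)
  : 'rV[rat]_m := \sum_(i < m) \sum_(j < m) (x 0 i * y 0 j) *: c i j.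

Definition powV (m : nat) (c : 'I_m -> 'I_m -> 'rV[rat]_m) (one x : 'rV[rat]_m)
  (n : nat) : 'rV[rat]_m := iter n (mulV c x) one.

Definition Lmat (m : nat) (c : 'I_m -> 'I_m -> 'rV[rat]_m) (a : 'rV[rat]_m)
  : 'M[rat]_m := \matrix_(j < m, k < m) (mulV c a (basisV j)) 0 k.

Definition trV (m : nat) (c : 'I_m -> 'I_m -> 'rV[rat]_m) (a : 'rV[rat]_m) : rat :=
  \tr (Lmat c a).

Definition linfun_of (m : nat) (f x : 'rV[rat]_m) : rat := \sum_(k < m) x 0 k * f 0 k.

(* Signature of the symmetric bilinear form with Gram matrix A:
   (#positive - #negative) diagonal entries of a congruent diagonal matrix
   (well defined by Sylvester's law of inertia). *)
Definition signature_is (m : nat) (A : 'M[rat]_m) (x : rat) : Prop :=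
  exists P : 'M[rat]_m,
    [/\ P \in unitmx, is_diag_mx (P *m A *m P^T) &
        x = (#|[set i : 'I_m | 0 < (P *m A *m P^T) i i]|%:R
             - #|[set i : 'I_m | (P *m A *m P^T) i i < 0]|%:R)].

(* Main.v *)
Require Import Defs.
From HB Require Import structures.
From mathcomp Require Import all_boot all_order all_algebra.
Import Order.TTheory GRing.Theory Num.Theory.
Local Open Scope ring_scope.
From mathcomp Require Import zify ring.
Set Implicit Arguments. Unset Strict Implicit.





Lemma tr_idem (F : fieldType) k (E : 'M[F]_k) : E *m E = E -> \tr E = (\rank E)%:R.
Proof.
move=> EE.
set C := col_base E; set R := row_base E.
have CR : C *m R = E by rewrite mulmx_base.
have h1 : (C *m R *m C) *m R = C *m R.
  by rewrite -(mulmxA (C *m R)) CR EE.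
have h2 : C *m R *m C = C by apply: (row_free_inj (row_base_free E)).
have fC : row_free C^T.
  by rewrite /row_free mxrank_tr; have := col_base_full E; rewrite /row_full.
have h3 : R *m C = 1%:M.
  apply: trmx_inj; apply: (row_free_inj fC).
  by rewrite /= -!trmx_mul mulmxA h2 mulmx1.
by rewrite -{1}CR mxtrace_mulC h3 mxtrace1.
Qed.

Lemma card_sumr k (P : pred 'I_k) : (#|[set i | P i]|%:R : rat) = \sum_i ((P i)%:R : rat).
Proof.
transitivity (\sum_(i in [set i | P i]) (1:rat)); first by rewrite sumr_const.
by rewrite big_mkcond; apply: eq_bigr => i _; rewrite inE; case: (P i).
Qed.

Section Alg.
Variable n : nat.
Local Notation m := n.+1.
Variables (c : 'I_m -> 'I_m -> 'rV[rat]_m) (one cu : 'rV[rat]_m).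
Hypothesis mulC : forall x y, mulV c x y = mulV c y x.
Hypothesis mulA : forall x y z, mulV c (mulV c x y) z = mulV c x (mulV c y z).
Hypothesis mul1 : forall x, mulV c one x = x.

Lemma basisE (i : 'I_m) k : basisV i 0 k = (i == k)%:R.
Proof. by rewrite /basisV mxE /= eq_sym. Qed.

Lemma mulV_basis x (i : 'I_m) : mulV c (basisV i) x = \sum_j x 0 j *: c i j.
Proof.
rewrite /mulV (bigD1 i) //= [X in _ + X]big1 => [|k ki]; last first.
  by apply: big1 => j _; rewrite basisE eq_sym (negbTE ki) mul0r scale0r.
by rewrite addr0; apply: eq_bigr => j _; rewrite basisE eqxx mul1r.
Qed.

Lemma mulV_expand x y : mulV c x y = \sum_i x 0 i *: mulV c (basisV i) y.
Proof.
transitivity (\sum_i x 0 i *: \sum_j y 0 j *: c i j); last first.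
  by apply: eq_bigr => i _; rewrite mulV_basis.
rewrite /mulV; apply: eq_bigr => i _; rewrite scaler_sumr.
by apply: eq_bigr => j _; rewrite scalerA.
Qed.

Lemma mulVDl a x y z : mulV c (a *: x + y) z = a *: mulV c x z + mulV c y z.
Proof.
rewrite !mulV_expand scaler_sumr -big_split /=; apply: eq_bigr => i _.
by rewrite !mxE scalerDl scalerA.
Qed.

Lemma mulV0l z : mulV c 0 z = 0.
Proof. by rewrite mulV_expand big1 // => i _; rewrite mxE scale0r. Qed.

Lemma mulVDr a x y z : mulV c z (a *: x + y) = a *: mulV c z x + mulV c z y.
Proof. by rewrite !(mulC z) mulVDl. Qed.

Lemma mulV0r z : mulV c z 0 = 0.
Proof. by rewrite mulC mulV0l. Qed.

Lemma mulVZl a x z : mulV c (a *: x) z = a *: mulV c x z.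
Proof. by rewrite -[a *: x]addr0 mulVDl mulV0l addr0. Qed.
Lemma mulVZr a x z : mulV c z (a *: x) = a *: mulV c z x.
Proof. by rewrite !(mulC z) mulVZl. Qed.
Lemma mulVD_l x y z : mulV c (x + y) z = mulV c x z + mulV c y z.
Proof. by have := mulVDl 1 x y z; rewrite !scale1r. Qed.

Lemma mulV_suml I (r : seq I) P (f : I -> 'rV[rat]_m) z :
  mulV c (\sum_(i <- r | P i) f i) z = \sum_(i <- r | P i) mulV c (f i) z.
Proof.
apply: (big_rec2 (fun a b => mulV c a z = b)) => [|i y1 y2 _ <-]; first exact: mulV0l.
by rewrite mulVD_l.
Qed.
Lemma mulV_sumr I (r : seq I) P (f : I -> 'rV[rat]_m) z :
  mulV c z (\sum_(i <- r | P i) f i) = \sum_(i <- r | P i) mulV c z (f i).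
Proof. by rewrite mulC mulV_suml; apply: eq_bigr => i _; rewrite mulC. Qed.

Lemma vec_expand (x : 'rV[rat]_m) : x = \sum_i x 0 i *: basisV i.
Proof.
apply/rowP => k; rewrite summxE (bigD1 k) //= big1 => [|i ik].
  by rewrite mxE basisE eqxx mulr1 addr0.
by rewrite mxE basisE (negbTE ik) mulr0.
Qed.

Lemma linfunDZ a x y : linfun_of cu (a *: x + y) = a * linfun_of cu x + linfun_of cu y.
Proof.
rewrite /linfun_of mulr_sumr -big_split /=; apply: eq_bigr => k _.
by rewrite !mxE mulrDl mulrA.
Qed.
Lemma linfun0 : linfun_of cu 0 = 0.
Proof. by rewrite /linfun_of big1 // => k _; rewrite mxE mul0r. Qed.
Lemma linfun_sum I (r : seq I) P (f : I -> 'rV[rat]_m) :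
  linfun_of cu (\sum_(i <- r | P i) f i) = \sum_(i <- r | P i) linfun_of cu (f i).
Proof.
apply: (big_rec2 (fun a b => linfun_of cu a = b)) => [|i y1 y2 _ <-]; first exact: linfun0.
by have := linfunDZ 1 (f i) y1; rewrite scale1r mul1r.
Qed.
Lemma linfunZ a x : linfun_of cu (a *: x) = a * linfun_of cu x.
Proof. by rewrite -[a *: x]addr0 linfunDZ linfun0 addr0. Qed.


Variable ep : 'I_m -> rat.
Hypothesis frob : forall i j, linfun_of cu (mulV c (basisV i) (basisV j)) = if i == j then ep i else 0.
Hypothesis ep2 : forall i, ep i * ep i = 1.

Lemma coordE (x : 'rV[rat]_m) k : x 0 k = ep k * linfun_of cu (mulV c x (basisV k)).
Proof.
rewrite {2}(vec_expand x) mulV_suml linfun_sum (bigD1 k) //= big1 => [|i ik].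
  by rewrite mulVZl linfunZ frob eqxx addr0 mulrCA ep2 mulr1.
by rewrite mulVZl linfunZ frob (negbTE ik) mulr0.
Qed.

Definition Om := \sum_i ep i *: mulV c (basisV i) (basisV i).

Lemma trVE a : trV c a = linfun_of cu (mulV c a Om).
Proof.
rewrite /trV /mxtrace /Om mulV_sumr linfun_sum; apply: eq_bigr => i _.
by rewrite mxE coordE mulA mulVZr linfunZ.
Qed.

Lemma etaE (x y : 'rV[rat]_m) : linfun_of cu (mulV c x y) =
  \sum_k \sum_l x 0 k * y 0 l * linfun_of cu (mulV c (basisV k) (basisV l)).
Proof.
rewrite {1}(vec_expand x) mulV_suml linfun_sum; apply: eq_bigr => k _.
rewrite mulVZl linfunZ {1}(vec_expand y) mulV_sumr linfun_sum mulr_sumr.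
by apply: eq_bigr => l _; rewrite mulVZr linfunZ mulrA.
Qed.

Lemma rowLmat a j : row j (Lmat c a) = mulV c a (basisV j).
Proof. by apply/rowP => k; rewrite !mxE. Qed.

Lemma mulLmat (x a : 'rV[rat]_m) : x *m Lmat c a = mulV c a x.
Proof.
rewrite mulmx_sum_row {2}(vec_expand x) mulV_sumr; apply: eq_bigr => i _.
by rewrite rowLmat mulVZr.
Qed.

Lemma oneLmat a : one *m Lmat c a = a.
Proof. by rewrite mulLmat mulC mul1. Qed.

Lemma LmatM a b : Lmat c (mulV c a b) = Lmat c b *m Lmat c a.
Proof.
apply/row_matrixP => j; rewrite row_mul !rowLmat mulLmat.
by rewrite mulA.
Qed.

Lemma Lmat1 : Lmat c one = 1%:M.
Proof. by apply/row_matrixP => j; rewrite rowLmat mul1 row1. Qed.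

Lemma LmatDZ a x y : Lmat c (a *: x + y) = a *: Lmat c x + Lmat c y.
Proof. by apply/matrixP => i j; rewrite !mxE mulVDl !mxE. Qed.

Lemma Lmat0 : Lmat c 0 = 0.
Proof. by apply/matrixP => i j; rewrite !mxE mulV0l mxE. Qed.


Hypothesis red : forall x k, powV c one x k = 0 -> x = 0.

Lemma powLmat x k : one *m (Lmat c x) ^+ k = powV c one x k.
Proof.
elim: k => [|k IH]; first by rewrite expr0 mulmx1.
by rewrite exprSr -mulmxE mulmxA IH mulLmat.
Qed.

Lemma nilp x k : (Lmat c x) ^+ k = 0 -> x = 0.
Proof. by move=> h; apply: (red (k := k)); rewrite -powLmat h mulmx0. Qed.

Lemma LmatMr a b : Lmat c a * Lmat c b = Lmat c (mulV c b a).
Proof. by rewrite LmatM. Qed.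

Lemma Lmat_comm a b : Lmat c a * Lmat c b = Lmat c b * Lmat c a.
Proof. by rewrite !LmatMr mulC. Qed.

Lemma Lmat_img_exp a j : exists z, (Lmat c a) ^+ j = Lmat c z.
Proof.
elim: j => [|j [z Hz]]; first by exists one; rewrite expr0 Lmat1.
by exists (mulV c a z); rewrite exprSr Hz LmatMr.
Qed.

Lemma horner_img y p : exists z, horner_mx (Lmat c y) p = Lmat c z.
Proof.
elim/poly_ind: p => [|p a [z Hz]]; first by exists 0; rewrite rmorph0 Lmat0.
exists (a *: one + mulV c y z).
by rewrite rmorphD rmorphM /= horner_mx_X horner_mx_C Hz LmatDZ Lmat1 scalemx1 LmatMr addrC.
Qed.

Lemma LmatZ a x : Lmat c (a *: x) = a *: Lmat c x.
Proof. by rewrite -[a *: x]addr0 LmatDZ Lmat0 addr0. Qed.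

Lemma Om_unit : Lmat c Om \in unitmx.
Proof.
rewrite -row_free_unit; apply: inj_row_free => v vW.
have Ov : mulV c Om v = 0 by rewrite -mulLmat.
apply/eqP; apply: contraT => vn0.
set B := Lmat c v; set W := Lmat c Om.
have BW : B * W = 0 by rewrite /B /W LmatMr Ov Lmat0.
have CH := Cayley_Hamilton B.
have cpn0 : char_poly B != 0 by apply: monic_neq0; apply: char_poly_monic.
have [k /= [q nq Hp]] := multiplicity_XsubC (char_poly B) 0.
rewrite cpn0 /= in nq; rewrite polyC0 subr0 in Hp.
have [h Hh] : exists h, q = h * 'X + (q.[0])%:P.
  have : root (q - q.[0]%:P) 0 by rewrite /root hornerD hornerN hornerC subrr.
  case/factor_theorem => h Hh'; exists h; rewrite polyC0 subr0 in Hh'.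
  by rewrite -Hh' subrK.
set q0 := q.[0] in Hh.
have q0n : q0 != 0 by [].
have [zQ HQ] := horner_img v h.
set Q := horner_mx B h in HQ.
have e1 : (Q * B + q0%:M) * B ^+ k = 0.
  by rewrite -CH Hp rmorphM Hh rmorphD rmorphM /= horner_mx_X horner_mx_C rmorphXn /= horner_mx_X.
set g := - q0^-1 *: zQ; set G := Lmat c g.
set F := B * G.
have BQ : B * Q = Q * B by rewrite HQ Lmat_comm.
have e2 : F * B ^+ k = B ^+ k.
  have sc : q0%:M * B ^+ k = q0 *: B ^+ k := mul_scalar_mx q0 (B ^+ k).
  rewrite mulrDl sc in e1.
  have e3 : Q * B * B ^+ k = - (q0 *: B ^+ k) by apply/eqP; rewrite -addr_eq0 e1.
  rewrite /F /G /g LmatZ -HQ -scalerAr -scalerAl BQ e3 scalerN scalerA.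
  by rewrite mulNr mulVf // scaleN1r opprK.
have H2 : forall j, F ^+ j * B ^+ k = B ^+ k.
  by elim=> [|j IH]; rewrite ?expr0 ?mul1r // exprSr -mulrA e2.
set E := F ^+ k.+1.
have cBG : GRing.comm B G by rewrite /GRing.comm Lmat_comm.
have EBG : E = B ^+ k.+1 * G ^+ k.+1 by rewrite /E /F exprMn_comm.
have EE : E * E = E.
  by rewrite {2}EBG exprSr !mulrA H2 -exprSr -EBG.
have En0 : E != 0.
  apply: contraNneq vn0 => E0; apply/eqP; apply: (nilp (k:=k)).
  by rewrite -/B -(H2 k.+1) -/E E0 mul0r.
have EW : E * W = 0 by rewrite /E exprSr -mulrA /F cBG -mulrA BW !mulr0.
have [e He] : exists e, E = Lmat c e.
  by have [z Hz] := Lmat_img_exp (mulV c g v) k.+1; exists z; rewrite /E /F /B /G LmatMr.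
have Oe : mulV c Om e = 0.
  by rewrite -(oneLmat (mulV c Om e)) -LmatMr -He EW mulmx0.
have trE : \tr E = 0.
  by rewrite He; change (trV c e = 0); rewrite trVE mulC Oe linfun0.
have := tr_idem EE; rewrite trE => /esym/eqP.
by rewrite pnatr_eq0 mxrank_eq0 (negbTE En0).
Qed.

Hypothesis epv : forall i, ep i = 1 \/ ep i = -1.

Definition etaG := \matrix_(i, j) linfun_of cu (mulV c (basisV i) (basisV j)).
Definition trG := \matrix_(i, j) trV c (mulV c Om (mulV c (basisV i) (basisV j))).

Lemma etaG_E i j : etaG i j = if i == j then ep i else 0.
Proof. by rewrite mxE frob. Qed.

Lemma trG_eq : trG = Lmat c Om *m etaG *m (Lmat c Om)^T.
Proof.
apply/matrixP => i j; rewrite !mxE trVE.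
have -> : mulV c (mulV c Om (mulV c (basisV i) (basisV j))) Om
   = mulV c (mulV c Om (basisV i)) (mulV c Om (basisV j)).
  rewrite [LHS]mulA (mulC (mulV c (basisV i) (basisV j)) Om) [RHS]mulA.
  by rewrite -(mulA (basisV i)) (mulC (basisV i) Om) mulA.
rewrite etaE exchange_big /=; apply: eq_bigr => l _; rewrite !mxE mulr_suml.
by apply: eq_bigr => k _; rewrite !mxE; rewrite mulrAC.
Qed.

Lemma sig_etaG_ok (P : 'M[rat]_m) : P *m etaG *m P^T = etaG ->
  P \in unitmx -> signature_is etaG (\sum_i ep i).
Proof.
move=> HP Pu; exists P; rewrite HP; split => //.
  by apply/is_diag_mxP => i j ij; rewrite etaG_E; case: eqP => // e; rewrite e eqxx in ij.
rewrite !card_sumr -sumrB; apply: eq_bigr => i _; rewrite etaG_E eqxx.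
by case: (epv i) => ->; rewrite ?ltr01 ?ltr10 ?ltrN10 ?ltr0N1 /=.
Qed.

Lemma both_sig : signature_is etaG (\sum_i ep i) /\ signature_is trG (\sum_i ep i).
Proof.
split; first by apply: (sig_etaG_ok (P := 1%:M)); rewrite ?unitmx1 // mul1mx trmx1 mulmx1.
have Wu := Om_unit.
have [P [Pu Pd Pc]] : signature_is etaG (\sum_i ep i).
  by apply: (sig_etaG_ok (P := 1%:M)); rewrite ?unitmx1 // mul1mx trmx1 mulmx1.
exists (invmx (Lmat c Om)).
have -> : invmx (Lmat c Om) *m trG *m (invmx (Lmat c Om))^T = etaG.
  rewrite trG_eq !mulmxA (mulVmx Wu) mul1mx -!mulmxA -trmx_mul (mulVmx Wu) trmx1 mulmx1.
  by [].
split; first by rewrite unitmx_inv.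
  by apply/is_diag_mxP => i j ij; rewrite etaG_E; case: eqP => // e; rewrite e eqxx in ij.
rewrite !card_sumr -sumrB; apply: eq_bigr => i _; rewrite etaG_E eqxx.
by case: (epv i) => ->; rewrite ?ltr01 ?ltr10 ?ltrN10 ?ltr0N1 /=.
Qed.

End Alg.


Lemma eps_sym r s n : odd s -> coprime r s -> (0 < n < r)%N -> eps r s (r - n) = eps r s n.
Proof.
move=> so cop /andP[n0 nr].
have r0 : (0 < r)%N by lia.
set q := (n * s %/ r)%N; set t := (n * s %% r)%N.
have Ens : (n * s = q * r + t)%N by rewrite /q /t -divn_eq.
have tr : (t < r)%N by rewrite ltn_mod.
have t0 : (0 < t)%N.
  rewrite lt0n; apply/negP => /eqP t0.
  have : (r %| n * s)%N by apply/dvdnP; exists q; rewrite Ens t0 addn0.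
  rewrite Gauss_dvdl // => /dvdn_leq; lia.
have qs : (q < s)%N.
  have : (q * r <= n * s)%N by lia.
  have : (n * s < r * s)%N by rewrite ltn_pmul2r; lia.
  move=> h1 h2; have : (q * r < s * r)%N by lia.
  by rewrite ltn_pmul2r.
have E : ((r - n) * s = (s - q - 1) * r + (r - t))%N.
  rewrite mulnBl mulnC Ens. nia.
rewrite /eps E divnMDl // divn_small ?addn0; last by lia.
rewrite -/q; congr (if _ then _ else _).
rewrite -subnDA oddB; last by lia.
by rewrite so /= oddD addbT /= negbK.
Qed.

Lemma sum_split (f : nat -> rat) m :
  \sum_(1 <= k < (2 * m).+1) f k = \sum_(i < m) (f (2 * i).+1 + f (2 * i).+2).
Proof.
elim: m => [|m IH]; first by rewrite big_ord0 big_geq.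
rewrite big_ord_recr /= -IH.
have -> : (2 * m.+1).+1 = ((2 * m).+1).+2 by rewrite mulnS.
rewrite big_nat_recr /=; last by lia.
rewrite big_nat_recr /=; last by lia.
by rewrite addrA.
Qed.

Lemma sg_eq r s : (3 <= r)%N -> odd r -> odd s -> (0 < s < r)%N -> coprime r s ->
  2^-1 * \sum_(1 <= n < r) (eps r s n)%:~R
  = \sum_(i < (r.-1)./2) ((eps r s (2 * i).+1)%:~R : rat).
Proof.
move=> r3 ro so srs cop.
set m := (r.-1)./2.
have rE : r = (2 * m).+1.
  have h := odd_double_half r.-1.
  have : odd r.-1 = false.
    have r0 : (0 < r)%N by lia.
    by move: ro; rewrite -(prednK r0) /= => /negbTE.
  move=> h2; rewrite h2 add0n -mul2n in h; rewrite /m; lia.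
have sumE := sum_split (fun n => (eps r s n)%:~R) m; rewrite -rE in sumE.
rewrite sumE big_split /=.
have -> : \sum_(i < m) ((eps r s (2 * i).+2)%:~R : rat) = \sum_(i < m) (eps r s (2 * i).+1)%:~R.
  rewrite (reindex_inj rev_ord_inj) /=; apply: eq_bigr => i _.
  have -> : (2 * (m - i.+1)).+2 = (r - (2 * i).+1)%N.
    have := ltn_ord i; lia.
  rewrite eps_sym //; have := ltn_ord i; lia.
set x := \sum_(i < m) _; by field.
Qed.



(* V_q^+ is modelled on 'rV[rat]_m, m = (r-1)/2, basis index i <-> e_{2i};
   c = structure constants, one = unit, cu = counit eps^+ (as coordinate vector). *)
Theorem mainTheorem14 (r s : nat)
  (c : 'I_((r.-1)./2) -> 'I_((r.-1)./2) -> 'rV[rat]_((r.-1)./2))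
  (one cu : 'rV[rat]_((r.-1)./2)) :
  (3 <= r)%N -> odd r -> odd s -> (0 < s < r)%N -> coprime r s ->
  (* commutative, associative, unital *)
  (forall x y, mulV c x y = mulV c y x) ->
  (forall x y z, mulV c (mulV c x y) z = mulV c x (mulV c y z)) ->
  (forall x, mulV c one x = x) ->
  (* semisimple (commutative finite-dimensional: no nonzero nilpotents) *)
  (forall x n, powV c one x n = 0 -> x = 0) ->
  (* Frobenius form eta^+(x,y) = eps^+(xy), diagonal with eta^+(e_2i,e_2i) = eps_{2i+1} *)
  (forall i j, linfun_of cu (mulV c (basisV i) (basisV j))
               = if i == j then (eps r s (2 * i).+1)%:~R else 0) ->
  let Omega := \sum_(i < (r.-1)./2)
                 (eps r s (2 * i).+1)%:~R *: mulV c (basisV i) (basisV i) in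
  let etaG := \matrix_(i, j) linfun_of cu (mulV c (basisV i) (basisV j)) in
  let trG := \matrix_(i, j) trV c (mulV c Omega (mulV c (basisV i) (basisV j))) in
  let sg := 2^-1 * \sum_(1 <= n < r) (eps r s n)%:~R in
  signature_is etaG sg /\ signature_is trG sg.
Proof.
move=> r3 ro so srs cop.
have [n En] : exists n, (r.-1)./2 = n.+1.
  have h := odd_double_half r.-1; have := leq_b1 (odd r.-1).
  move=> h1; rewrite -mul2n in h.
  exists ((r.-1)./2).-1; rewrite prednK //; lia.
rewrite sg_eq //.
move: c one cu; rewrite En => c one cu mC mA m1 red frob Om etaG trG sg.
have ep2 : forall i : 'I_n.+1, ((eps r s (2 * i).+1)%:~R : rat) * (eps r s (2 * i).+1)%:~R = 1.
  by move=> i; rewrite /eps; case: ifP => _; rewrite ?rmorphN1 ?rmorph1 ?mulrNN mulr1.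
have epv : forall i : 'I_n.+1, (eps r s (2 * i).+1)%:~R = 1 :> rat \/ (eps r s (2 * i).+1)%:~R = -1 :> rat.
  by move=> i; rewrite /eps; case: ifP => _; rewrite ?rmorphN1 ?rmorph1; first [by left | by right].
exact: (@both_sig n c one cu mC mA m1 (fun i => (eps r s (2 * i).+1)%:~R) frob ep2 red epv).
Qed.
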